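(* Let $\theta_0:\mathbb{R}^d\to\mathbb{R}^{d_\theta}$ be measurable and for each $N\ge1$ let $\hat\theta_N$ be a (possibly random) $\mathbb{R}^{d_\theta}$-valued estimator built from data independent of $X^s,X^t$. Suppose (i) $\|\hat\theta_N(X^s)\|_\infty\le\xi_N$ a.s. for every $N\ge1$; (ii) $\mathbb{E}\|\theta_0(X^s)\|_\infty^8<\infty$; (iii) there are constants $c>0$, $m\ge0$ with $r_0(x)\le c\exp(m\|x\|_\infty)$ for all $x$; (iv) $\mathbb{E}[r_0(X^s)^2]<\infty$; (v) $\mathbb{E}\exp(\varsigma\|X^s\|_\infty^2)<\infty$ for some constant $\varsigma>0$. Then for $N\ge2$, $$\mathbb{E}\|\hat\theta_N(X^t)-\theta_0(X^t)\|_2^2=\mathbb{E}\big[\|\hat\theta_N(X^s)-\theta_0(X^s)\|_2^2r_0(X^s)\big]\le c_1\exp\{c_2(\log N)^{1/2}\}\,\mathbb{E}\|\hat\theta_N(X^s)-\theta_0(X^s)\|_2^2+\frac{c_3d_\theta(\xi_N^2+1)}{N},$$ with constants $c_1,c_2,c_3$ not depending on $N$.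
   Context: $X^s,X^t$ are random vectors in $\mathbb{R}^d$ with Lebesgue densities $p,q$, $\{q>0\}\subset\{p>0\}$, and density ratio $r_0=q/p$ (with $0/0=0$). Expectations are over both the test point and the randomness of $\hat\theta_N$. *)

(* Defs.v *)
From HB Require Import structures.
From mathcomp Require Import all_boot all_order all_algebra.
From mathcomp Require Import all_classical all_reals all_analysis.
Set Implicit Arguments. Unset Strict Implicit. Unset Printing Implicit Defensive.
Import Order.TTheory GRing.Theory Num.Theory.
Local Open Scope ring_scope.
Local Open Scope classical_set_scope.

(* Points of R^n are n.-tuples of reals (measurable structure generated by the
   coordinate maps, i.e. the Borel sigma-algebra of R^n). *)

Definition sup_norm {R : realType} {n : nat} (x : n.-tuple R) : R :=
  \big[Num.max/0]_(i < n) `|tnth x i|.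

Definition dist2_sq {R : realType} {n : nat} (u v : n.-tuple R) : R :=
  \sum_(i < n) (tnth u i - tnth v i) ^+ 2.

Definition is_lebesgue_tuple {R : realType} {n : nat}
  (mu : {measure set (n.-tuple R) -> \bar R}) : Prop :=
  forall a b : n.-tuple R, (forall i, tnth a i <= tnth b i) ->
    mu [set x | forall i, tnth a i <= tnth x i <= tnth b i] =
    (\prod_(i < n) (tnth b i - tnth a i))%:E.

(* density ratio r0 = q / p, with the convention 0/0 = 0 (x / 0 = 0 in mathcomp) *)
Definition dens_ratio {R : realType} {n : nat} (p q : n.-tuple R -> R)
  (x : n.-tuple R) : R := q x / p x.

Definition Ex {R : realType} {n : nat} (mu : {measure set (n.-tuple R) -> \bar R})
  (p : n.-tuple R -> R) (f : n.-tuple R -> \bar R) : \bar R :=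
  (\int[mu]_x ((p x)%:E * f x))%E.

(* E f(omega, X): omega is the randomness of the estimator (law P), X has
   Lebesgue density p and is independent of omega, so the joint law is the
   product P (x) (p . mu); the expectation is the iterated integral. *)
Definition Exw {R : realType} {dO : measure_display} {Omega : measurableType dO}
  (P : probability Omega R) {n : nat} (mu : {measure set (n.-tuple R) -> \bar R})
  (p : n.-tuple R -> R) (f : Omega -> n.-tuple R -> \bar R) : \bar R :=
  (\int[P]_w Ex mu p (f w))%E.

(* Main.v *)
Require Import Defs.
From HB Require Import structures.
From mathcomp Require Import all_boot all_order all_algebra.
From mathcomp Require Import all_classical all_reals all_analysis.
From mathcomp Require Import measurable_realfun.
Import Order.TTheory GRing.Theory Num.Theory.
Local Open Scope ring_scope.
Local Open Scope classical_set_scope.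
From mathcomp Require Import ring lra.

Lemma alg1 (R : realType) (n r E : R) : 1 <= n -> n ^+ 4 <= E -> 0 <= r ->
  n * r <= r ^+ 2 + E.
Proof.
move=> n1 hE r0.
have h2 : n ^+ 2 <= n ^+ 4.
  have h1 : 1 <= n ^+ 2 by nra.
  nra.
case: (lerP n r) => h; nra.
Qed.

Lemma alg2 (R : realType) (n r t E : R) : 1 <= n -> n ^+ 4 <= E -> 0 <= r -> 0 <= t ->
  n * (t * r) <= r ^+ 2 + t ^+ 4 + E.
Proof.
move=> n1 hE r0 t0.
have t4 : 0 <= t ^+ 4 by rewrite exprn_ge0.
have nt0 : 0 <= n * t by nra.
case: (lerP (n * t) r) => h1.
  have : n * (t * r) <= r * r by nra.
  nra.
have h2 : n * (t * r) <= (n * t) * (n * t) by nra.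
case: (lerP n t) => h3.
  have h4 : n * n <= t * t by nra.
  have : (n * t) * (n * t) <= t ^+ 4.
    have -> : t ^+ 4 = (t * t) * (t * t) by rewrite !exprS expr0 mulr1 !mulrA.
    have -> : (n * t) * (n * t) = (n * n) * (t * t) by rewrite mulrACA.
    by apply: ler_wpM2r; [nra|].
  nra.
have h4 : t * t <= n * n by nra.
have : (n * t) * (n * t) <= n ^+ 4.
  have -> : n ^+ 4 = (n * n) * (n * n) by rewrite !exprS expr0 mulr1 !mulrA.
  have -> : (n * t) * (n * t) = (n * n) * (t * t) by rewrite mulrACA.
  by apply: ler_wpM2l; [nra|].
have : 0 <= r ^+ 2 by rewrite exprn_ge0.
nra.
Qed.

Lemma pointwise (R : realType) (N : nat) (dth xi c m vs Dv r s xn : R) :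
  (2 <= N)%N -> 0 < vs -> 0 <= m -> 0 <= dth -> 0 <= r -> 0 <= s -> 0 <= xn ->
  0 <= Dv -> Dv <= 2 * dth * (xi ^+ 2 + s ^+ 2) ->
  r <= c * expR (m * xn) ->
  Dv * r <= c * expR (2 * m / Num.sqrt vs * Num.sqrt (ln N%:R)) * Dv
     + 2 * dth * (xi ^+ 2 + 1) / N%:R * (r ^+ 2 + s ^+ 8 + expR (vs * xn ^+ 2)).
Proof.
move=> N2 vs0 m0 dth0 r0 s0 xn0 Dv0 hDv hr.
have n1 : 1 <= N%:R :> R by rewrite ler1n; apply: leq_trans N2.
have n0 : 0 < N%:R :> R by apply: lt_le_trans n1.
have L0 : 0 <= ln (N%:R : R) by exact: ln_ge0.
set L := ln (N%:R : R) in L0 *.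
set n := (N%:R : R) in n1 n0 *.
set E := expR (vs * xn ^+ 2).
have E0 : 0 <= E by exact: expR_ge0.
have G0 : 0 <= r ^+ 2 + s ^+ 8 + E by rewrite !addr_ge0// exprn_ge0.
have c0 : 0 <= c.
  have he := expR_gt0 (m * xn); have := le_trans r0 hr; nra.
have sv0 : 0 < Num.sqrt vs by rewrite sqrtr_gt0.
have sL0 : 0 <= Num.sqrt L by exact: sqrtr_ge0.
set R0 := 2 * Num.sqrt L / Num.sqrt vs.
have R00 : 0 <= R0 by rewrite /R0 divr_ge0// ?mulr_ge0// ltW.
have A0 : 0 <= 2 * dth * (xi ^+ 2 + 1) / n.
  apply: divr_ge0; last exact: ltW.
  by apply: mulr_ge0; [rewrite mulr_ge0|rewrite addr_ge0 ?sqr_ge0].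
case: (lerP xn R0) => hx.
  have hK : r <= c * expR (2 * m / Num.sqrt vs * Num.sqrt L).
    apply: (le_trans hr); apply: ler_wpM2l => //; rewrite ler_expR.
    have -> : 2 * m / Num.sqrt vs * Num.sqrt L = m * R0 by rewrite /R0; ring.
    exact: ler_wpM2l.
  have : Dv * r <= c * expR (2 * m / Num.sqrt vs * Num.sqrt L) * Dv.
    by nra.
  have : 0 <= 2 * dth * (xi ^+ 2 + 1) / n * (r ^+ 2 + s ^+ 8 + E) by rewrite mulr_ge0.
  lra.
have hE : n ^+ 4 <= E.
  have h4 : 4%:R * L <= vs * xn ^+ 2.
    have hR2 : vs * R0 ^+ 2 = 4%:R * L.
      rewrite /R0 expr_div_n exprMn sqr_sqrtr// sqr_sqrtr; last exact: ltW.
      by field; rewrite gt_eqF.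
    rewrite -hR2; apply: ler_wpM2l; first exact: ltW.
    by rewrite ler_sqr ?nnegrE// ltW.
  rewrite /E -(lnK (x:=n)); last by rewrite posrE.
  by rewrite -expRM_natl ler_expR.
have h1 := @alg1 _ _ _ _ n1 hE r0.
have h2 := @alg2 _ _ _ _ _ n1 hE r0 (sqr_ge0 s).
have s8 : (s ^+ 2) ^+ 4 = s ^+ 8 by rewrite -exprM.
rewrite s8 in h2.
have : Dv * r <= 2 * dth * (xi ^+ 2 + 1) / n * (r ^+ 2 + s ^+ 8 + E).
  rewrite mulrAC ler_pdivlMr//.
  have : Dv * r * n <= 2 * dth * (xi ^+ 2 * (n * r) + n * (s ^+ 2 * r)).
    have : Dv * r <= 2 * dth * (xi ^+ 2 + s ^+ 2) * r by apply: ler_wpM2r.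
    nra.
  have x0 : 0 <= xi ^+ 2 by exact: sqr_ge0.
  have s80 : 0 <= s ^+ 8 by exact: exprn_ge0.
  have : xi ^+ 2 * (n * r) <= xi ^+ 2 * (r ^+ 2 + s ^+ 8 + E) by apply: ler_wpM2l => //; lra.
  have : 2 * dth * (xi ^+ 2 * (r ^+ 2 + s ^+ 8 + E) + (r ^+ 2 + s ^+ 8 + E))
        = 2 * dth * (xi ^+ 2 + 1) * (r ^+ 2 + s ^+ 8 + E) by ring.
  nra.
have : 0 <= c * expR (2 * m / Num.sqrt vs * Num.sqrt L) * Dv.
  by rewrite !mulr_ge0// expR_ge0.
lra.
Qed.

Lemma measurable_inv (R : realType) : measurable_fun setT (@GRing.inv R).
Proof.
have -> : [set: R] = [set x | x != 0] `|` [set 0].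
  apply/seteqP; split => x //= _; case: (eqVneq x 0) => h; [right|left] => //.
apply/measurable_funU.
- by apply: open_measurable; exact: open_neq.
- exact: measurable_set1.
split; last exact: measurable_fun_set1.
apply: open_continuous_measurable_fun; first exact: open_neq.
by move=> x; rewrite inE /= => hx; exact: inv_continuous.
Qed.

Lemma measurable_bigmax (R : realType) d (T : measurableType d) (I : Type) (s : seq I)
  (F : I -> T -> R) : (forall i, measurable_fun setT (F i)) ->
  measurable_fun setT (fun x => \big[Num.max/0]_(i <- s) F i x).
Proof.
move=> mF; elim: s => [|i s IH].
  by under eq_fun do rewrite big_nil; exact: measurable_cst.
under eq_fun do rewrite big_cons.
exact: measurable_maxr.
Qed.

Lemma measurable_bigsum (R : realType) d (T : measurableType d) (I : Type) (s : seq I)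
  (F : I -> T -> R) : (forall i, measurable_fun setT (F i)) ->
  measurable_fun setT (fun x => \sum_(i <- s) F i x).
Proof.
move=> mF; elim: s => [|i s IH].
  by under eq_fun do rewrite big_nil; exact: measurable_cst.
under eq_fun do rewrite big_cons.
exact: measurable_funD.
Qed.

Lemma measurable_sup_norm (R : realType) d (T : measurableType d) n
  (f : T -> n.-tuple R) : measurable_fun setT f ->
  measurable_fun setT (fun x => sup_norm (f x)).
Proof.
move=> mf; rewrite /sup_norm.
apply: (@measurable_bigmax _ _ _ _ _ (fun i x => `|tnth (f x) i|)) => i.
apply: measurableT_comp; first exact: normr_measurable.
exact: (measurableT_comp (measurable_tnth i) mf).
Qed.

Lemma measurable_dist2 (R : realType) d (T : measurableType d) n
  (f g : T -> n.-tuple R) : measurable_fun setT f -> measurable_fun setT g ->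
  measurable_fun setT (fun x => dist2_sq (f x) (g x)).
Proof.
move=> mf mg; rewrite /dist2_sq.
apply: (@measurable_bigsum _ _ _ _ _ (fun i x => (tnth (f x) i - tnth (g x) i) ^+ 2)) => i.
apply: measurable_funX; apply: measurable_funB.
  exact: (measurableT_comp (measurable_tnth i) mf).
exact: (measurableT_comp (measurable_tnth i) mg).
Qed.

Lemma measurable_dens_ratio (R : realType) d (T : measurableType d) n
  (p q : n.-tuple R -> R) (f : T -> n.-tuple R) :
  measurable_fun setT p -> measurable_fun setT q -> measurable_fun setT f ->
  measurable_fun setT (fun x => dens_ratio p q (f x)).
Proof.
move=> mp mq mf; rewrite /dens_ratio.
apply: measurable_funM; first exact: measurableT_comp.
apply: measurableT_comp; first exact: measurable_inv.
exact: measurableT_comp.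
Qed.

Lemma sup_norm_ge0 {R : realType} {n} (x : n.-tuple R) : 0 <= sup_norm x.
Proof. exact: bigmax_ge_id. Qed.

Lemma le_sup_norm {R : realType} {n} (x : n.-tuple R) i : `|tnth x i| <= sup_norm x.
Proof. exact: (le_bigmax _ (fun i => `|tnth x i|)). Qed.

Lemma sup_norm_le (R : realType) n (x : n.-tuple R) b :
  (forall i, `|tnth x i| <= b) -> 0 <= b -> sup_norm x <= b.
Proof.
move=> h b0; rewrite /sup_norm; elim/big_ind: _ => //.
by move=> u v hu hv; rewrite ge_max hu hv.
Qed.

Lemma lebesgue_sigma_finite (R : realType) d (mu : {measure set (d.-tuple R) -> \bar R}) :
  is_lebesgue_tuple mu -> sigma_finite setT mu.
Proof.
move=> hmu.
pose a (k : nat) : d.-tuple R := [tuple - k%:R | i < d].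
pose b (k : nat) : d.-tuple R := [tuple k%:R | i < d].
exists (fun k => [set x | forall i, tnth (a k) i <= tnth x i <= tnth (b k) i]).
  apply/seteqP; split => x // _.
  exists (Num.truncn (sup_norm x)).+1 => //= i.
  rewrite !tnth_mktuple -ler_norml.
  apply: (le_trans (le_sup_norm x i)); apply/ltW; exact: archimedean.Num.Theory.truncnS_gt.
move=> k; split.
  have -> : [set x | forall i, tnth (a k) i <= tnth x i <= tnth (b k) i] =
     \bigcap_(i in [set: 'I_d]) ((@tnth d R)^~ i @^-1` `[tnth (a k) i, tnth (b k) i]).
    apply/seteqP; split => x /=.
      by move=> h i _ /=; rewrite in_itv /= h.
    by move=> h i; have := h i I; rewrite /= in_itv.
  apply: fin_bigcap_measurable; first exact: finite_finset.
  move=> i _; rewrite -[X in measurable X]setTI.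
  exact: (measurable_tnth i).
rewrite hmu; first exact: ltry.
by move=> i; rewrite !tnth_mktuple; have := ler0n R k; lra.
Qed.
Lemma chain (R : realType) d1 d2 (T1 : measurableType d1) (T2 : measurableType d2)
  (P : probability T1 R) (mu : {sigma_finite_measure set T2 -> \bar R})
  (fF fD fB : T1 * T2 -> R) (g : T2 -> R) (K C : R) :
  measurable_fun setT fF -> measurable_fun setT fD -> measurable_fun setT fB ->
  measurable_fun setT g ->
  (forall z, 0 <= fF z) -> (forall z, 0 <= fD z) -> (forall z, 0 <= fB z) ->
  (forall y, 0 <= g y) -> 0 <= K -> 0 <= C ->
  (forall z, fB z = 0 -> fF z <= K * fD z + C * g z.2) ->
  (\int[P]_w \int[mu]_y (fB (w, y))%:E = 0)%E ->
  (\int[P]_w \int[mu]_y (fF (w, y))%:E <=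
    K%:E * \int[P]_w \int[mu]_y (fD (w, y))%:E + C%:E * \int[mu]_y (g y)%:E)%E.
Proof.
move=> mF mD mB mg F0 D0 B0 g0 K0 C0 hpt hB.
have mE (f : T1 * T2 -> R) : measurable_fun setT f -> measurable_fun setT (fun z => (f z)%:E).
  by move=> mf; exact/measurable_EFinP.
have FT (f : T1 * T2 -> R) : measurable_fun setT f -> (forall z, 0 <= f z) ->
    (\int[P \x mu]_z (f z)%:E = \int[P]_w \int[mu]_y (f (w, y))%:E)%E.
  by move=> mf f0; rewrite fubini_tonelli1//; exact: mE.
have mgs : measurable_fun setT (fun z : T1 * T2 => g z.2).
  exact: measurableT_comp.
rewrite -FT//.
have -> : (\int[mu]_y (g y)%:E = \int[P \x mu]_z (g z.2)%:E)%E.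
  rewrite (FT (fun z => g z.2))//=.
  by rewrite -[LHS]mule1 -(probability_setT P) -integral_cst.
rewrite -(FT fD)// -!ge0_integralZl_EFin//; try exact: mE; try (by move=> z _; rewrite lee_fin).
rewrite -ge0_integralD//; last 4 first.
- by move=> z _; rewrite -EFinM lee_fin mulr_ge0.
- by apply/measurable_EFinP; apply: measurable_funM.
- by move=> z _; rewrite -EFinM lee_fin mulr_ge0.
- by apply/measurable_EFinP; apply: measurable_funM.
rewrite -FT// in hB.
have : ae_eq (P \x mu)%E setT (EFin \o fB) (cst 0%E).
  apply/ae_eq_integral_abs => //; first exact: mE.
  rewrite -hB; apply: eq_integral => z _ /=; by rewrite ger0_norm.
move=> hae; apply: ae_ge0_le_integral => //.
- by move=> z _; rewrite lee_fin.
- exact: mE.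
- by move=> z _; rewrite -!EFinM adde_ge0// lee_fin mulr_ge0.
- apply: emeasurable_funD; apply/measurable_EFinP; apply: measurable_funM => //.
- apply: filterS hae => z /(_ I) /= [] h _.
  by rewrite -!EFinM -EFinD lee_fin; apply: hpt.
Qed.

Definition sfmu (R : realType) (d : nat) (mu : {measure set (d.-tuple R) -> \bar R})
  (h : sigma_finite setT mu) : set (d.-tuple R) -> \bar R := mu.
HB.instance Definition _ R d mu h := Measure.copy (@sfmu R d mu h) mu.
HB.instance Definition _ R d mu h := @Measure_isSigmaFinite.Build _ _ _ (@sfmu R d mu h) h.

Lemma dist2_bound (R : realType) n (u v : n.-tuple R) (xi : R) :
  sup_norm u <= xi ->
  dist2_sq u v <= 2 * n%:R * (xi ^+ 2 + sup_norm v ^+ 2).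
Proof.
move=> hu.
have su0 := sup_norm_ge0 u.
have hxi : sup_norm u ^+ 2 <= xi ^+ 2 by rewrite ler_sqr ?nnegrE//; exact: le_trans hu.
rewrite /dist2_sq.
apply: (@le_trans _ _ (\sum_(i < n) (2 * (xi ^+ 2 + sup_norm v ^+ 2)))).
  apply: ler_sum => i _.
  have ha := le_sup_norm u i; have hb := le_sup_norm v i.
  move: ha hb; rewrite !ler_norml => /andP[ha1 ha2] /andP[hb1 hb2].
  have sv0 := sup_norm_ge0 v.
  have h1 : tnth u i ^+ 2 <= sup_norm u ^+ 2 by nra.
  have h2 : tnth v i ^+ 2 <= sup_norm v ^+ 2 by nra.
  have h3 : (tnth u i - tnth v i) ^+ 2 <= 2 * (tnth u i ^+ 2 + tnth v i ^+ 2).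
    have := sqr_ge0 (tnth u i + tnth v i); nra.
  lra.
by rewrite sumr_const card_ord -mulr_natl; lra.
Qed.

Theorem proposition4p4 (R : realType) (d dth : nat)
  (mu : {measure set (d.-tuple R) -> \bar R})
  (p q : d.-tuple R -> R)
  (dO : measure_display) (Omega : measurableType dO) (P : probability Omega R)
  (theta0 : d.-tuple R -> dth.-tuple R)
  (thetahat : nat -> Omega -> d.-tuple R -> dth.-tuple R)
  (xi : nat -> R) (c m : R) :
  is_lebesgue_tuple mu ->
  (* p, q are Lebesgue probability densities with {q > 0} in {p > 0} *)
  measurable_fun setT p -> measurable_fun setT q ->
  (forall x, 0 <= p x) -> (forall x, 0 <= q x) ->
  (\int[mu]_x (p x)%:E = 1)%E -> (\int[mu]_x (q x)%:E = 1)%E ->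
  (forall x, 0 < q x -> 0 < p x) ->
  measurable_fun setT theta0 ->
  (forall N, measurable_fun setT (fun z : Omega * d.-tuple R => thetahat N z.1 z.2)) ->
  (* (i) *)
  (forall N, (1 <= N)%N ->
     Exw P mu p (fun w x => (if xi N < sup_norm (thetahat N w x) then 1 else 0)%:E)
     = 0%E) ->
  (* (ii) *)
  (Ex mu p (fun x => (sup_norm (theta0 x) ^+ 8)%:E) < +oo)%E ->
  (* (iii) *)
  0 < c -> 0 <= m ->
  (forall x, dens_ratio p q x <= c * expR (m * sup_norm x)) ->
  (* (iv) *)
  (Ex mu p (fun x => (dens_ratio p q x ^+ 2)%:E) < +oo)%E ->
  (* (v) *)
  (exists2 vs : R, 0 < vs &
     (Ex mu p (fun x => (expR (vs * sup_norm x ^+ 2))%:E) < +oo)%E) ->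
  exists c1 c2 c3 : R, forall N : nat, (2 <= N)%N ->
    Exw P mu q (fun w x => (dist2_sq (thetahat N w x) (theta0 x))%:E)
    = Exw P mu p (fun w x =>
        (dist2_sq (thetahat N w x) (theta0 x) * dens_ratio p q x)%:E)
    /\
    (Exw P mu p (fun w x =>
        (dist2_sq (thetahat N w x) (theta0 x) * dens_ratio p q x)%:E)
     <= (c1 * expR (c2 * Num.sqrt (ln N%:R)))%:E
          * Exw P mu p (fun w x => (dist2_sq (thetahat N w x) (theta0 x))%:E)
        + (c3 * dth%:R * (xi N ^+ 2 + 1) / N%:R)%:E)%E.
Proof.
move=> hleb mp mq p0 q0 _ _ hqp mth mhat hi hii c0 m0 hiii hiv [vs vs0 hv].
pose hsf := @lebesgue_sigma_finite _ _ _ hleb.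
pose mu' := @sfmu _ _ _ hsf.
pose G x := dens_ratio p q x ^+ 2 + sup_norm (theta0 x) ^+ 8 + expR (vs * sup_norm x ^+ 2).
have r0 x : 0 <= dens_ratio p q x by rewrite /dens_ratio divr_ge0.
have G0 x : 0 <= G x by rewrite /G !addr_ge0 ?sqr_ge0 ?exprn_ge0 ?sup_norm_ge0// expR_ge0.
have mpr : measurable_fun setT (fun x => dens_ratio p q x).
  exact: (@measurable_dens_ratio _ _ _ _ p q id).
have ms8 : measurable_fun setT (fun x => sup_norm (theta0 x) ^+ 8).
  by apply: measurable_funX; exact: measurable_sup_norm.
have msx : measurable_fun setT (fun x : d.-tuple R => sup_norm x).
  exact: (@measurable_sup_norm _ _ _ _ id).
have mex : measurable_fun setT (fun x : d.-tuple R => expR (vs * sup_norm x ^+ 2)).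
  apply: measurableT_comp; first exact: measurable_expR.
  by apply: measurable_funM; [exact: measurable_cst|exact: measurable_funX].
have mG : measurable_fun setT G.
  apply: measurable_funD => //; apply: measurable_funD => //.
  exact: measurable_funX.
have mpG : measurable_fun setT (fun x => p x * G x) by exact: measurable_funM.
have ExG : (Ex mu p (fun x => (G x)%:E) \is a fin_num)%E.
  have e : Ex mu p (fun x => (G x)%:E) =
     (Ex mu p (fun x => (dens_ratio p q x ^+ 2)%:E)
      + Ex mu p (fun x => (sup_norm (theta0 x) ^+ 8)%:E)
      + Ex mu p (fun x => (expR (vs * sup_norm x ^+ 2))%:E))%E.
    rewrite /Ex.
    transitivity (\int[mu]_x ((p x * dens_ratio p q x ^+ 2)%:E
       + (p x * sup_norm (theta0 x) ^+ 8)%:E + (p x * expR (vs * sup_norm x ^+ 2))%:E))%E.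
      by apply: eq_integral => x _; rewrite -!EFinM -!EFinD /G; congr EFin; ring.
    rewrite ge0_integralD//; [|
      by move=> x _; apply: adde_ge0; rewrite lee_fin mulr_ge0 ?sqr_ge0 ?exprn_ge0 ?sup_norm_ge0|
      by apply: emeasurable_funD; apply/measurable_EFinP; apply: measurable_funM => //;
         exact: measurable_funX|
      by move=> x _; rewrite lee_fin mulr_ge0// expR_ge0|
      by apply/measurable_EFinP; exact: measurable_funM].
    rewrite ge0_integralD//; [
      by move=> x _; rewrite lee_fin mulr_ge0 ?sqr_ge0|
      by apply/measurable_EFinP; apply: measurable_funM => //; exact: measurable_funX|
      by move=> x _; rewrite lee_fin mulr_ge0 ?exprn_ge0 ?sup_norm_ge0|
      by apply/measurable_EFinP; exact: measurable_funM].
  have ge0E (f : d.-tuple R -> R) : (forall x, 0 <= f x) -> (0 <= Ex mu p (fun x => (f x)%:E))%E.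
    by move=> f0; apply: integral_ge0 => x _; rewrite -EFinM lee_fin mulr_ge0.
  rewrite e fin_numD; apply/andP; split; first rewrite fin_numD; first apply/andP; first split.
  - by rewrite ge0_fin_numE//; apply: ge0E => x; rewrite sqr_ge0.
  - by rewrite ge0_fin_numE//; apply: ge0E => x; rewrite exprn_ge0 ?sup_norm_ge0.
  - rewrite ge0_fin_numE//; apply: ge0E => x; exact: expR_ge0.
set EG := Ex mu p (fun x => (G x)%:E) in ExG.
exists c, (2 * m / Num.sqrt vs), (2 * fine EG) => N N2; split.
  apply: eq_integral => w _; apply: eq_integral => x _.
  rewrite -!EFinM; congr EFin; rewrite /dens_ratio.
  have [hp|hp] := eqVneq (p x) 0.
    have hq : q x = 0.
      by apply/eqP; rewrite eq_le q0 andbT leNgt; apply/negP => /hqp; rewrite hp ltxx.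
    by rewrite hp hq !(mul0r, mulr0).
  by field.
pose K := c * expR (2 * m / Num.sqrt vs * Num.sqrt (ln N%:R)).
pose C := 2 * dth%:R * (xi N ^+ 2 + 1) / N%:R.
pose fF (z : Omega * d.-tuple R) := p z.2 *
  (dist2_sq (thetahat N z.1 z.2) (theta0 z.2) * dens_ratio p q z.2).
pose fD (z : Omega * d.-tuple R) := p z.2 * dist2_sq (thetahat N z.1 z.2) (theta0 z.2).
pose fB (z : Omega * d.-tuple R) := p z.2 *
  (if xi N < sup_norm (thetahat N z.1 z.2) then 1 else 0).
pose g y := p y * G y.
have mp2 : measurable_fun setT (fun z : Omega * d.-tuple R => p z.2).
  exact: measurableT_comp.
have mth2 : measurable_fun setT (fun z : Omega * d.-tuple R => theta0 z.2).
  exact: measurableT_comp.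
have mdist : measurable_fun setT
    (fun z : Omega * d.-tuple R => dist2_sq (thetahat N z.1 z.2) (theta0 z.2)).
  exact: (@measurable_dist2 _ _ _ _ (fun z : Omega * d.-tuple R => thetahat N z.1 z.2)
            (fun z => theta0 z.2)).
have mr2 : measurable_fun setT (fun z : Omega * d.-tuple R => dens_ratio p q z.2).
  exact: (@measurable_dens_ratio _ _ _ _ p q snd).
have mF : measurable_fun setT fF by apply: measurable_funM => //; exact: measurable_funM.
have mD : measurable_fun setT fD by exact: measurable_funM.
have mB : measurable_fun setT fB.
  apply: measurable_funM => //; apply: measurable_fun_ifT.
  - apply: measurable_fun_ltr; first exact: measurable_cst.
    exact: (@measurable_sup_norm _ _ _ _ (fun z : Omega * d.-tuple R => thetahat N z.1 z.2)).
  - exact: measurable_cst.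
  - exact: measurable_cst.
have dist0 u v : 0 <= @dist2_sq R dth u v.
  by rewrite /dist2_sq; apply: sumr_ge0 => i _; exact: sqr_ge0.
have F0 z : 0 <= fF z by apply: mulr_ge0; [exact: p0|apply: mulr_ge0; [exact: dist0|exact: r0]].
have D0 z : 0 <= fD z by apply: mulr_ge0; [exact: p0|exact: dist0].
have B0 z : 0 <= fB z by apply: mulr_ge0; [exact: p0|case: ifP].
have g0 y : 0 <= g y by apply: mulr_ge0; [exact: p0|exact: G0].
have K0 : 0 <= K by rewrite /K mulr_ge0 ?expR_ge0// ltW.
have C0 : 0 <= C.
  rewrite /C divr_ge0 ?ler0n//; apply: mulr_ge0; first by rewrite mulr_ge0.
  by rewrite addr_ge0 ?sqr_ge0.
have hpt z : fB z = 0 -> fF z <= K * fD z + C * g z.2.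
  rewrite /fB /fF /fD /g => hz.
  have [hp|hp] := eqVneq (p z.2) 0.
    by rewrite hp !mul0r !mulr0 addr0.
  move: hz => /eqP; rewrite mulf_eq0 (negbTE hp) /=.
  case: ifPn => [_|hn _]; first by rewrite oner_eq0.
  have hle : sup_norm (thetahat N z.1 z.2) <= xi N by rewrite leNgt.
  have := @pointwise R N dth%:R (xi N) c m vs
     (dist2_sq (thetahat N z.1 z.2) (theta0 z.2)) (dens_ratio p q z.2)
     (sup_norm (theta0 z.2)) (sup_norm z.2) N2 vs0 m0 (ler0n _ _) (r0 _)
     (sup_norm_ge0 _) (sup_norm_ge0 _) (dist0 _ _) (@dist2_bound _ _ _ (theta0 z.2) _ hle) (hiii _).
  rewrite -/K -/C -/(G z.2) => H.
  have := ler_wpM2l (p0 z.2) H.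
  set DD := dist2_sq _ _; set GG := G z.2; set pp := p z.2.
  have -> : pp * (K * DD + C * GG) = K * (pp * DD) + C * (pp * GG) by ring.
  done.
have hB : (\int[P]_w \int[mu']_y (fB (w, y))%:E = 0)%E.
  rewrite -(hi N (ltnW N2)); apply: eq_integral => w _; apply: eq_integral => x _.
  by rewrite /fB EFinM.
have := @chain R _ _ Omega (d.-tuple R) P mu' fF fD fB g K C mF mD mB mpG
   F0 D0 B0 g0 K0 C0 hpt hB.
have -> : (\int[mu']_y (g y)%:E)%E = EG.
  by rewrite /EG /Ex; apply: eq_integral => x _; rewrite EFinM.
rewrite -(fineK ExG) -EFinM.
have -> : C * fine EG = 2 * fine EG * dth%:R * (xi N ^+ 2 + 1) / N%:R by rewrite /C; ring.
move=> H.
have eF : Exw P mu p (fun w x =>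
    (dist2_sq (thetahat N w x) (theta0 x) * dens_ratio p q x)%:E) =
    (\int[P]_w \int[mu']_y (fF (w, y))%:E)%E.
  by apply: eq_integral => w _; apply: eq_integral => x _; rewrite /fF EFinM.
have eD : Exw P mu p (fun w x => (dist2_sq (thetahat N w x) (theta0 x))%:E) =
    (\int[P]_w \int[mu']_y (fD (w, y))%:E)%E.
  by apply: eq_integral => w _; apply: eq_integral => x _; rewrite /fD EFinM.
by rewrite eF eD.
Qed.
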